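(* Let $U\subset V\subset\mathbb R^2$ be compact star-shaped domains (origin in the interior) with smooth boundaries, and assume $V$ is convex. Then $\mathrm{sys}(\mathbb T^2\times\partial U)\le\mathrm{sys}(\mathbb T^2\times\partial V)$.
   Context: $\mathbb T^2=\mathbb R^2/\mathbb Z^2$, $T^*\mathbb T^2=\mathbb T^2\times\mathbb R^2$, $\lambda_{\rm can}=p_1dq_1+p_2dq_2$. For a compact star-shaped domain $A\subset\mathbb R^2$ with smooth boundary, $\mathrm{sys}(\mathbb T^2\times\partial A)$ is the minimal action (period) of a closed Reeb orbit of the contact form $\lambda_{\rm can}|_{\mathbb T^2\times\partial A}$. *)

(* Defs.v *)
From Stdlib Require Import Reals ZArith.
From Coquelicot Require Import Coquelicot.
Open Scope R_scope.

Definition smooth (f : R -> R) : Prop := forall (n : nat) (x : R), ex_derive_n f n x.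

(** A (strictly) star-shaped compact domain in R^2 with smooth boundary is
    described by its radial function rho : smooth, positive, 2*PI-periodic. *)
Definition radial_function (rho : R -> R) : Prop :=
  smooth rho /\ (forall th, 0 < rho th) /\ (forall th, rho (th + 2 * PI) = rho th).

Definition star_domain (rho : R -> R) (x : R * R) : Prop :=
  exists r th, 0 <= r <= rho th /\ x = (r * cos th, r * sin th).

Definition bcurve (rho : R -> R) (th : R) : R * R :=
  (rho th * cos th, rho th * sin th).
Definition bcurve' (rho : R -> R) (th : R) : R * R :=
  (Derive rho th * cos th - rho th * sin th, Derive rho th * sin th + rho th * cos th).

Definition tangent_bd (rho : R -> R) (p w : R * R) : Prop :=
  exists th s, p = bcurve rho th /\ w = (s * fst (bcurve' rho th), s * snd (bcurve' rho th)).

Definition on_bd (rho : R -> R) (p : R * R) : Prop := exists th, p = bcurve rho th.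

Definition convex2 (A : R * R -> Prop) : Prop :=
  forall x y t, A x -> A y -> 0 <= t <= 1 ->
    A ((1 - t) * fst x + t * fst y, (1 - t) * snd x + t * snd y).

(** Canonical Liouville form lambda = p1 dq1 + p2 dq2 evaluated on a tangent
    vector (a, b) (a = dq-part, b = dp-part) at a point with momentum p. *)
Definition lambda_can (p a : R * R) : R := fst p * fst a + snd p * snd a.

Definition dlambda (a b a' b' : R * R) : R :=
  (fst b * fst a' - fst a * fst b') + (snd b * snd a' - snd a * snd b').

(** A curve t |-> (q(t), p(t)) in R^2 x R^2 (lift of T^2 x R^2 in q) that is a
    Reeb trajectory of lambda_can restricted to T^2 x dA_rho:
    it stays on the hypersurface, is differentiable, and its velocity v
    satisfies lambda(v) = 1 and d lambda(v, w) = 0 for all w tangent to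
    T^2 x dA_rho (which characterizes the Reeb vector field). *)
Definition reeb_trajectory (rho : R -> R) (q1 q2 p1 p2 : R -> R) : Prop :=
  forall t, on_bd rho (p1 t, p2 t) /\
    exists a1 a2 b1 b2 : R,
      is_derive q1 t a1 /\ is_derive q2 t a2 /\
      is_derive p1 t b1 /\ is_derive p2 t b2 /\
      lambda_can (p1 t, p2 t) (a1, a2) = 1 /\
      (forall (al w : R * R), tangent_bd rho (p1 t, p2 t) w ->
          dlambda (a1, a2) (b1, b2) al w = 0).

(** T is the period (= action) of a closed Reeb orbit on T^2 x dA_rho:
    the trajectory returns to its starting point in T^2 x R^2 at time T > 0
    (q is taken modulo Z^2). *)
Definition closed_reeb_period (rho : R -> R) (T : R) : Prop :=
  0 < T /\ exists (q1 q2 p1 p2 : R -> R) (k1 k2 : Z),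
    reeb_trajectory rho q1 q2 p1 p2 /\
    q1 T = q1 0 + IZR k1 /\ q2 T = q2 0 + IZR k2 /\
    p1 T = p1 0 /\ p2 T = p2 0.

Definition sys (rho : R -> R) : Rbar := Glb_Rbar (closed_reeb_period rho).

(* Main.v *)
Require Import Defs.
From Stdlib Require Import Reals Lra Lia ZArith.
From Coquelicot Require Import Coquelicot.
Open Scope R_scope.

Lemma smooth_ex (rho : R -> R) : smooth rho -> forall x, ex_derive rho x.
Proof. intros H x. exact (H 1%nat x). Qed.

Lemma periodZ (g : R -> R) : (forall x, g (x + 2 * PI) = g x) ->
  forall (n : Z) x, g (x + 2 * PI * IZR n) = g x.
Proof.
  intros Hg.
  assert (Hn : forall (k : nat) x, g (x + 2 * PI * INR k) = g x).
  { induction k as [|k IH]; intros x.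
    - simpl. f_equal. ring.
    - rewrite S_INR. replace (x + 2 * PI * (INR k + 1)) with ((x + 2 * PI * INR k) + 2 * PI) by ring.
      rewrite Hg. apply IH. }
  intros n x.
  destruct (Z_le_gt_dec 0 n) as [Hp|Hp].
  - replace n with (Z.of_nat (Z.to_nat n)) by lia. rewrite <- INR_IZR_INZ. apply Hn.
  - replace n with (- Z.of_nat (Z.to_nat (- n)))%Z by lia. rewrite opp_IZR, <- INR_IZR_INZ.
    rewrite <- (Hn (Z.to_nat (-n)) (x + 2 * PI * - INR (Z.to_nat (- n)))). f_equal. ring.
Qed.

Lemma reduce2pi (x : R) : exists m : Z, 0 <= x - 2 * PI * IZR m < 2 * PI.
Proof.
  pose proof PI_RGT_0 as Hpi.
  destruct (archimed (x / (2 * PI))) as [H1 H2].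
  exists (up (x / (2 * PI)) - 1)%Z. rewrite minus_IZR.
  set (u := IZR (up (x / (2 * PI)))) in *.
  assert (E : x = (x / (2*PI)) * (2 * PI)) by (field; lra).
  split.
  - assert (u - 1 <= x / (2*PI)) by lra.
    assert ((u - 1) * (2 * PI) <= x / (2 * PI) * (2*PI)) by (apply Rmult_le_compat_r; lra).
    lra.
  - assert (x / (2*PI) * (2*PI) < u * (2 * PI)) by (apply Rmult_lt_compat_r; lra). lra.
Qed.

Lemma cos_per x : cos (x + 2 * PI) = cos x.
Proof. rewrite cos_plus, cos_2PI, sin_2PI. ring. Qed.
Lemma sin_per x : sin (x + 2 * PI) = sin x.
Proof. rewrite sin_plus, cos_2PI, sin_2PI. ring. Qed.

Lemma polar (rho : R -> R) : radial_function rho -> forall s phi, 0 < s ->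
  star_domain rho (s * cos phi, s * sin phi) -> s <= rho phi.
Proof.
  intros [_ [Hpos Hper]] s phi Hs [r [th [[Hr0 Hr1] Heq]]].
  injection Heq as E1 E2.
  pose proof (sin2_cos2 phi) as C1. pose proof (sin2_cos2 th) as C2.
  unfold Rsqr in *.
  assert (Hrs : r = s).
  { assert (r * r = s * s).
    { transitivity ((r * cos th) * (r * cos th) + (r * sin th) * (r * sin th)).
      - replace ((r * cos th) * (r * cos th) + (r * sin th) * (r * sin th)) with (r * r * (sin th * sin th + cos th * cos th)) by ring. rewrite C2. ring.
      - rewrite <- E1, <- E2. replace ((s * cos phi) * (s * cos phi) + (s * sin phi) * (s * sin phi)) with (s * s * (sin phi * sin phi + cos phi * cos phi)) by ring. rewrite C1. ring. }
    nra. }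
  subst r.
  assert (Ec : cos phi = cos th) by (apply (Rmult_eq_reg_l s); lra).
  assert (Es : sin phi = sin th) by (apply (Rmult_eq_reg_l s); lra).
  destruct (reduce2pi (th - phi)) as [m Hm].
  set (v := th - phi - 2 * PI * IZR m) in *.
  assert (Cv : cos v = 1).
  { unfold v. replace (th - phi - 2 * PI * IZR m) with (th - phi + 2 * PI * IZR (- m))
      by (rewrite opp_IZR; ring).
    rewrite (periodZ cos cos_per). rewrite cos_minus. nra. }
  assert (Sv : sin v = 0).
  { unfold v. replace (th - phi - 2 * PI * IZR m) with (th - phi + 2 * PI * IZR (- m))
      by (rewrite opp_IZR; ring).
    rewrite (periodZ sin sin_per). rewrite sin_minus. rewrite Ec, Es. ring. }
  destruct (sin_eq_O_2PI_0 v ltac:(lra) ltac:(lra) Sv) as [H0|[H0|H0]].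
  - assert (th = phi + 2 * PI * IZR m) by (unfold v in H0; lra).
    rewrite H in Hr1. rewrite (periodZ rho Hper) in Hr1. exact Hr1.
  - rewrite H0, cos_PI in Cv. lra.
  - lra.
Qed.

Lemma const_deriv (f : R -> R) : (forall t, is_derive f t 0) -> forall a b, f a = f b.
Proof.
  intros H.
  assert (pr : derivable f).
  { intros x. exists 0. apply is_derive_Reals. apply H. }
  assert (C : constant f).
  { apply (null_derivative_1 f pr). intros x. apply derive_pt_eq_0. apply is_derive_Reals, H. }
  intros a b. apply C.
Qed.

Lemma orbit_data (rho : R -> R) (T : R) : closed_reeb_period rho T ->
  exists th0 (k1 k2 : Z),
    IZR k1 * fst (bcurve' rho th0) + IZR k2 * snd (bcurve' rho th0) = 0 /\
    IZR k1 * fst (bcurve rho th0) + IZR k2 * snd (bcurve rho th0) = T.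
Proof.
  intros [HT [q1 [q2 [p1 [p2 [k1 [k2 [Htr [Eq1 [Eq2 [Ep1 Ep2]]]]]]]]]]].
  assert (Hb : forall t, is_derive p1 t 0 /\ is_derive p2 t 0).
  { intros t. destruct (Htr t) as [[th Hth] [a1 [a2 [b1 [b2 [D1 [D2 [D3 [D4 [L W]]]]]]]]]].
    assert (Ht0 : tangent_bd rho (p1 t, p2 t) (0, 0)).
    { exists th, 0. split; [exact Hth|]. f_equal; ring. }
    pose proof (W (1, 0) (0, 0) Ht0) as W1. pose proof (W (0, 1) (0, 0) Ht0) as W2.
    unfold dlambda in W1, W2; simpl in W1, W2.
    assert (b1 = 0) by lra. assert (b2 = 0) by lra. subst. split; assumption. }
  assert (Cp1 : forall t, p1 t = p1 0) by (intros; apply const_deriv; intros; apply Hb).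
  assert (Cp2 : forall t, p2 t = p2 0) by (intros; apply const_deriv; intros; apply Hb).
  destruct (Htr 0) as [[th0 Hth0] _].
  set (t1 := fst (bcurve' rho th0)). set (t2 := snd (bcurve' rho th0)).
  set (P1 := p1 0). set (P2 := p2 0).
  assert (Ha : forall t, exists a1 a2, is_derive q1 t a1 /\ is_derive q2 t a2 /\
             a1 * t1 + a2 * t2 = 0 /\ P1 * a1 + P2 * a2 = 1).
  { intros t. destruct (Htr t) as [_ [a1 [a2 [b1 [b2 [D1 [D2 [D3 [D4 [L W]]]]]]]]]].
    rewrite Cp1, Cp2 in L, W.
    assert (Htg : tangent_bd rho (p1 0, p2 0) (t1, t2)).
    { exists th0, 1. split; [exact Hth0|]. unfold t1, t2. f_equal; ring. }
    assert (Ht0 : tangent_bd rho (p1 0, p2 0) (0, 0)).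
    { exists th0, 0. split; [exact Hth0|]. f_equal; ring. }
    pose proof (W (1, 0) (0, 0) Ht0) as W1. pose proof (W (0, 1) (0, 0) Ht0) as W2.
    pose proof (W (0, 0) (t1, t2) Htg) as W3.
    unfold dlambda in W1, W2, W3; unfold lambda_can in L; simpl in W1, W2, W3, L.
    exists a1, a2. unfold P1, P2. split; [exact D1|]. split; [exact D2|]. split; lra. }
  assert (Cg : forall t, is_derive (fun t => q1 t * t1 + q2 t * t2) t 0).
  { intros t. destruct (Ha t) as [a1 [a2 [D1 [D2 [E _]]]]].
    rewrite <- E. apply (is_derive_plus (fun t => q1 t * t1) (fun t => q2 t * t2));
    apply (is_derive_scal_l (K := R_AbsRing) (V := R_NormedModule)); assumption. }
  assert (Ch : forall t, is_derive (fun t => q1 t * P1 + q2 t * P2 - t) t 0).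
  { intros t. destruct (Ha t) as [a1 [a2 [D1 [D2 [_ E]]]]].
    replace 0 with (a1 * P1 + a2 * P2 - 1) by lra.
    apply (is_derive_minus (fun t => q1 t * P1 + q2 t * P2) (fun t => t)).
    - apply (is_derive_plus (fun t => q1 t * P1) (fun t => q2 t * P2));
      apply (is_derive_scal_l (K := R_AbsRing) (V := R_NormedModule)); assumption.
    - apply (is_derive_id (K := R_AbsRing)). }
  pose proof (const_deriv _ Cg T 0) as G. pose proof (const_deriv _ Ch T 0) as H.
  simpl in G, H.
  exists th0, k1, k2. fold t1 t2.
  assert (H0 : fst (bcurve rho th0) = P1) by (rewrite <- Hth0; reflexivity).
  assert (H1 : snd (bcurve rho th0) = P2) by (rewrite <- Hth0; reflexivity).
  rewrite H0, H1.
  split.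
  - assert (IZR k1 = q1 T - q1 0) by lra. assert (IZR k2 = q2 T - q2 0) by lra.
    rewrite H2, H3. lra.
  - assert (IZR k1 = q1 T - q1 0) by lra. assert (IZR k2 = q2 T - q2 0) by lra.
    rewrite H2, H3. fold P1 P2 in H. lra.
Qed.

Lemma deriv_approx (f : R -> R) x l : is_derive f x l -> forall eps, 0 < eps ->
  exists d, 0 < d /\ forall h, h <> 0 -> Rabs h < d ->
    Rabs (f (x + h) - f x - l * h) <= eps * Rabs h.
Proof.
  intros Hd eps He. apply is_derive_Reals in Hd.
  destruct (Hd eps He) as [del Hdel]. exists del. split; [apply cond_pos|].
  intros h Hh Hl. specialize (Hdel h Hh Hl).
  replace (f (x + h) - f x - l * h) with (h * ((f (x + h) - f x) / h - l)) by (field; auto).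
  rewrite Rabs_mult. rewrite Rmult_comm. apply Rmult_le_compat_r; [apply Rabs_pos| lra].
Qed.

Lemma same_sign a b : (0 < a /\ 0 < b) \/ (a < 0 /\ b < 0) -> 0 < a * b.
Proof. intros [[]|[]]; nra. Qed.
Lemma pos_div a b : (0 < a /\ 0 < b) \/ (a < 0 /\ b < 0) -> 0 < a / b.
Proof. intros [[]|[]]. - apply Rdiv_lt_0_compat; lra.
  - replace (a / b) with ((- a) / (- b)) by (field; lra). apply Rdiv_lt_0_compat; lra. Qed.
Lemma frac01 a b : (0 < a <= b) \/ (b <= a < 0) -> 0 < a / b <= 1.
Proof. intros [[]|[]].
  - split. apply Rdiv_lt_0_compat; lra. apply (Rmult_le_reg_r b); [lra|]. field_simplify; lra.
  - replace (a / b) with ((- a) / (- b)) by (field; lra). split. apply Rdiv_lt_0_compat; lra.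
    apply (Rmult_le_reg_r (- b)); [lra|]. field_simplify; lra. Qed.

Lemma support (rho : R -> R) : radial_function rho -> convex2 (star_domain rho) ->
  forall th0 k1 k2,
  k1 * fst (bcurve' rho th0) + k2 * snd (bcurve' rho th0) = 0 ->
  0 < k1 * fst (bcurve rho th0) + k2 * snd (bcurve rho th0) ->
  forall x, star_domain rho x ->
  k1 * fst x + k2 * snd x <= k1 * fst (bcurve rho th0) + k2 * snd (bcurve rho th0).
Proof.
  intros Hr Hc th0 k1 k2 Htan Hpos [x1 x2] Hx.
  pose proof Hr as [Hsm [Hrp Hper]].
  apply Rnot_lt_le; intro Hlt.
  unfold bcurve, bcurve' in *; simpl in *.
  set (r0 := rho th0) in *. set (r' := Derive rho th0) in *.
  set (c := cos th0) in *. set (sn := sin th0) in *.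
  assert (Hcs : c * c + sn * sn = 1).
  { pose proof (sin2_cos2 th0). unfold Rsqr in H. unfold c, sn. lra. }
  assert (Hr0 : 0 < r0) by apply Hrp.
  set (d1 := x1 - r0 * c). set (d2 := x2 - r0 * sn).
  set (t1 := r' * c - r0 * sn) in *. set (t2 := r' * sn + r0 * c) in *.
  set (mu := - k1 * t2 + k2 * t1).
  assert (Iden : forall v1 v2, (t1 * t1 + t2 * t2) * (k1 * v1 + k2 * v2) =
     (t1 * v1 + t2 * v2) * (k1 * t1 + k2 * t2) + (t1 * v2 - t2 * v1) * mu)
    by (intros; unfold mu; ring).
  assert (Htp : t1 * (r0 * sn) - t2 * (r0 * c) = - (r0 * r0)).
  { unfold t1, t2. replace (- (r0 * r0)) with (- (r0 * r0) * (c * c + sn * sn)) by (rewrite Hcs; ring). ring. }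
  assert (Hnt : 0 < t1 * t1 + t2 * t2).
  { assert (t1 * t1 + t2 * t2 = r' * r' + r0 * r0).
    { unfold t1, t2. replace (r' * r' + r0 * r0) with ((r' * r' + r0 * r0) * (c * c + sn * sn)) by (rewrite Hcs; ring). ring. }
    nra. }
  assert (Hmu : mu < 0).
  { pose proof (Iden (r0 * c) (r0 * sn)) as I1. rewrite Htan, Htp in I1.
    assert (0 < (t1 * t1 + t2 * t2) * (k1 * (r0 * c) + k2 * (r0 * sn))) by (apply Rmult_lt_0_compat; lra).
    assert (Hrr : 0 < r0 * r0) by nra.
    assert (0 < (r0 * r0) * (- mu)) by (rewrite Rmult_0_r, Rplus_0_l in I1; rewrite I1 in H; lra).
    destruct (Rlt_dec mu 0); [assumption|].
    assert (0 <= (r0 * r0) * mu) by (apply Rmult_le_pos; lra). lra. }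
  assert (Hcr : t1 * d2 - t2 * d1 < 0).
  { pose proof (Iden d1 d2) as I1. rewrite Htan in I1.
    assert (0 < k1 * d1 + k2 * d2) by (unfold d1, d2; lra).
    assert (0 < (t1 * t1 + t2 * t2) * (k1 * d1 + k2 * d2)) by (apply Rmult_lt_0_compat; lra).
    assert (0 < (t1 * d2 - t2 * d1) * mu) by (rewrite Rmult_0_r, Rplus_0_l in I1; rewrite I1 in H0; lra).
    destruct (Rlt_dec (t1 * d2 - t2 * d1) 0); [assumption|].
    assert ((t1 * d2 - t2 * d1) * mu <= 0).
    { apply Rmult_le_0_l; lra. }  lra. }
  assert (HPV : star_domain rho (r0 * c, r0 * sn)).
  { exists r0, th0. split; [|reflexivity]. split; [lra|]. unfold r0; lra. }
  set (D := c * d2 - sn * d1).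
  destruct (Req_dec D 0) as [HD|HD].
  -
    set (ed := c * d1 + sn * d2).
    assert (E1 : d1 = ed * c).
    { replace d1 with (d1 * (c * c + sn * sn)) by (rewrite Hcs; ring).
      unfold ed. replace (d1 * (c * c + sn * sn)) with (c * (c * d1 + sn * d2) - sn * D) by (unfold D; ring).
      rewrite HD. ring. }
    assert (E2 : d2 = ed * sn).
    { replace d2 with (d2 * (c * c + sn * sn)) by (rewrite Hcs; ring).
      unfold ed. replace (d2 * (c * c + sn * sn)) with (sn * (c * d1 + sn * d2) + c * D) by (unfold D; ring).
      rewrite HD. ring. }
    assert (Hed : 0 < ed).
    { rewrite E1, E2 in Hcr.
      assert (t1 * (ed * sn) - t2 * (ed * c) = ed * (- r0)).
      { replace (ed * - r0) with (ed * (t1 * (r0 * sn) - t2 * (r0 * c)) / r0)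
          by (rewrite Htp; field; lra). field. lra. }
      nra. }
    assert (Hx' : star_domain rho ((r0 + ed) * cos th0, (r0 + ed) * sin th0)).
    { replace ((r0 + ed) * cos th0, (r0 + ed) * sin th0) with (x1, x2); [exact Hx|].
      fold c sn. f_equal.
      - assert (x1 = r0 * c + d1) by (unfold d1; ring). rewrite H, E1. ring.
      - assert (x2 = r0 * sn + d2) by (unfold d2; ring). rewrite H, E2. ring. }
    pose proof (polar rho Hr (r0 + ed) th0 ltac:(lra) Hx'). fold r0 in H. lra.
  - set (E' := - sn * d2 - c * d1).
    set (cH := - (t1 * d2 - t2 * d1)).
    assert (HcH : 0 < cH) by (unfold cH; lra).
    assert (DH : is_derive (fun phi => r0 * D - rho phi * (cos phi * d2 - sin phi * d1)) th0 cH).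
    { auto_derive. - apply (smooth_ex rho Hsm). - change (Derive (fun x : R => rho x) th0) with r'. unfold cH, t1, t2, c, sn, r0. ring. }
    assert (DE : is_derive (fun phi => cos phi * d2 - sin phi * d1) th0 E').
    { auto_derive. - exact I. - unfold E', c, sn. ring. }
    assert (DS : is_derive sin 0 1).
    { auto_derive. - exact I. - rewrite cos_0. ring. }
    destruct (deriv_approx _ _ _ DH (cH/2) ltac:(lra)) as [dH [HdH AH]].
    destruct (deriv_approx _ _ _ DE 1 Rlt_0_1) as [dE [HdE AE]].
    destruct (deriv_approx _ _ _ DS (1/2) ltac:(lra)) as [dS [HdS AS]].
    assert (HaD : 0 < Rabs D) by (apply Rabs_pos_lt; exact HD).
    assert (HaE : 0 <= Rabs E') by apply Rabs_pos.
    set (eps := Rmin (Rmin (dH/2) (dE/2)) (Rmin (dS/2) (Rmin (Rabs D / (2 * (Rabs E' + 1))) (Rabs D / (4 * r0))))).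
    assert (Heps : 0 < eps).
    { unfold eps. repeat apply Rmin_pos; try lra; apply Rdiv_lt_0_compat; lra. }
    assert (Hm1 : eps <= dH/2 /\ eps <= dE/2 /\ eps <= dS/2 /\
                  eps <= Rabs D / (2 * (Rabs E' + 1)) /\ eps <= Rabs D / (4 * r0)).
    { unfold eps.
      pose proof (Rmin_l (Rmin (dH/2) (dE/2)) (Rmin (dS/2) (Rmin (Rabs D / (2 * (Rabs E' + 1))) (Rabs D / (4 * r0))))).
      pose proof (Rmin_r (Rmin (dH/2) (dE/2)) (Rmin (dS/2) (Rmin (Rabs D / (2 * (Rabs E' + 1))) (Rabs D / (4 * r0))))).
      pose proof (Rmin_l (dH/2) (dE/2)). pose proof (Rmin_r (dH/2) (dE/2)).
      pose proof (Rmin_l (dS/2) (Rmin (Rabs D / (2 * (Rabs E' + 1))) (Rabs D / (4 * r0)))).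
      pose proof (Rmin_r (dS/2) (Rmin (Rabs D / (2 * (Rabs E' + 1))) (Rabs D / (4 * r0)))).
      pose proof (Rmin_l (Rabs D / (2 * (Rabs E' + 1))) (Rabs D / (4 * r0))).
      pose proof (Rmin_r (Rabs D / (2 * (Rabs E' + 1))) (Rabs D / (4 * r0))).
      repeat split; lra. }
    destruct Hm1 as [Hm1 [Hm2 [Hm3 [Hm4 Hm5]]]].
    assert (Hb1 : eps * (Rabs E' + 1) <= Rabs D / 2).
    { apply (Rmult_le_compat_r (Rabs E' + 1)) in Hm4; [|lra].
      replace (Rabs D / (2 * (Rabs E' + 1)) * (Rabs E' + 1)) with (Rabs D / 2) in Hm4 by (field; lra). lra. }
    assert (Hb2 : r0 * eps <= Rabs D / 4).
    { apply (Rmult_le_compat_l r0) in Hm5; [|lra].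
      replace (r0 * (Rabs D / (4 * r0))) with (Rabs D / 4) in Hm5 by (field; lra). lra. }
    assert (Hh : exists h, Rabs h = eps /\ ((0 < h /\ 0 < D) \/ (h < 0 /\ D < 0))).
    { destruct (Rlt_dec 0 D).
      - exists eps. split; [apply Rabs_pos_eq; lra| left; lra].
      - exists (- eps). split; [rewrite Rabs_Ropp; apply Rabs_pos_eq; lra| right; lra]. }
    destruct Hh as [h [Hha HhD]].
    assert (Hh0 : h <> 0) by (intro; subst; rewrite Rabs_R0 in Hha; lra).
    specialize (AH h Hh0 ltac:(lra)). specialize (AE h Hh0 ltac:(lra)).
    specialize (AS h Hh0 ltac:(lra)).
    cbv beta in AH, AE. rewrite Rplus_0_l, sin_0 in AS.
    set (phi := th0 + h) in *.
    set (Ep := cos phi * d2 - sin phi * d1) in *.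
    set (Hp := r0 * D - rho phi * Ep) in *.
    assert (H0 : r0 * D - rho th0 * (cos th0 * d2 - sin th0 * d1) = 0) by (unfold D, r0, c, sn; ring).
    rewrite H0 in AH. fold c sn in AE.
    assert (HED : Rabs (E' * h) = Rabs E' * eps) by (rewrite Rabs_mult, Hha; reflexivity).
    rewrite Hha in AH, AE, AS.
    apply Rabs_le_between in AH. apply Rabs_le_between in AE. apply Rabs_le_between in AS.
    pose proof (Rabs_le_between (E' * h) (Rabs E' * eps)) as [HE'' _].
    specialize (HE'' ltac:(rewrite HED; lra)).
    assert (Hsh : sin h = sin phi * c - cos phi * sn).
    { replace h with (phi - th0) by (unfold phi; ring). rewrite sin_minus. reflexivity. }
    assert (HabsD : (0 < D /\ Rabs D = D) \/ (D < 0 /\ Rabs D = - D)).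
    { destruct HhD as [[_ HD1]|[_ HD1]]; [left; split; [lra|apply Rabs_pos_eq; lra]
        |right; split; [lra|apply Rabs_left; lra]]. }
    assert (Hsg : ((0 < Hp /\ 0 < Ep) \/ (Hp < 0 /\ Ep < 0)) /\
                  ((0 < r0 * D /\ 0 < Ep) \/ (r0 * D < 0 /\ Ep < 0)) /\
                  ((0 < r0 * sin h <= Ep) \/ (Ep <= r0 * sin h < 0))).
    { assert (eps * Rabs E' + eps <= Rabs D / 2) by lra.
      assert (Hrs : r0 * (3 / 2 * eps) <= 3 / 8 * Rabs D) by lra.
      assert (HcHe : 0 < cH * eps) by (apply Rmult_lt_0_compat; lra).
      fold D in AE.
      destruct HhD as [[Hhp HDp]|[Hhn HDn]].
      - assert (Hhe : h = eps) by (rewrite <- Hha; symmetry; apply Rabs_pos_eq; lra).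
        assert (RD : Rabs D = D) by (apply Rabs_pos_eq; lra).
        subst h.
        assert (0 < sin eps <= 3/2 * eps) by lra.
        assert (0 < r0 * sin eps) by (apply Rmult_lt_0_compat; lra).
        assert (r0 * sin eps <= r0 * (3/2 * eps)) by (apply Rmult_le_compat_l; lra).
        split; [left; split; lra|]. split; [left; split; [apply Rmult_lt_0_compat|]; lra|].
        left; lra.
      - assert (Hhe : h = - eps) by (rewrite <- Hha; rewrite Rabs_left; lra).
        assert (RD : Rabs D = - D) by (apply Rabs_left; lra).
        subst h.
        assert (HcHe' : cH * - eps = - (cH * eps)) by ring.
        assert (HE3 : E' * - eps = - (E' * eps)) by ring.
        assert (- (3/2 * eps) <= sin (- eps) < 0) by lra.
        assert (r0 * sin (- eps) < 0).
        { assert (0 < r0 * (- sin (- eps))) by (apply Rmult_lt_0_compat; lra). lra. }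
        assert (r0 * (- (3/2 * eps)) <= r0 * sin (- eps)) by (apply Rmult_le_compat_l; lra).
        assert (r0 * D < 0).
        { assert (0 < r0 * (- D)) by (apply Rmult_lt_0_compat; lra). lra. }
        split; [right; split; lra|]. split; [right; split; lra|].
        right; lra. }
    destruct Hsg as [Hs1 [Hs2 Hs3]].
    assert (HEp0 : Ep <> 0) by (destruct Hs2 as [[]|[]]; lra).
    set (t := r0 * sin h / Ep). set (s := r0 * D / Ep).
    assert (Ht : 0 <= t <= 1) by (pose proof (frac01 _ _ Hs3); unfold t; lra).
    assert (Hs : 0 < s) by (apply pos_div; exact Hs2).
    assert (Hsr : s - rho phi = Hp / Ep) by (unfold s, Hp; field; exact HEp0).
    assert (Hsr' : 0 < Hp / Ep) by (apply pos_div; exact Hs1).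
    pose proof (Hc (r0 * c, r0 * sn) (x1, x2) t HPV Hx Ht) as Hz. simpl in Hz.
    replace ((1 - t) * (r0 * c) + t * x1, (1 - t) * (r0 * sn) + t * x2)
      with (s * cos phi, s * sin phi) in Hz.
    + pose proof (polar rho Hr s phi Hs Hz). lra.
    + unfold t, s. rewrite Hsh. unfold D. unfold Ep in *. unfold d1, d2 in *.
      f_equal; field; exact HEp0.
Qed.

Lemma U_orbit (rho : R -> R) : radial_function rho -> forall k1 k2 : Z,
  (IZR k1 <> 0 \/ IZR k2 <> 0) ->
  exists m, closed_reeb_period rho (IZR k1 * fst (bcurve rho m) + IZR k2 * snd (bcurve rho m)).
Proof.
  intros Hr k1 k2 Hk. pose proof Hr as [Hsm [Hrp Hper]].
  set (K1 := IZR k1) in *. set (K2 := IZR k2) in *.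
  set (f := fun th => K1 * (rho th * cos th) + K2 * (rho th * sin th)).
  assert (Df : forall th, is_derive f th (K1 * fst (bcurve' rho th) + K2 * snd (bcurve' rho th))).
  { intros th. unfold f. auto_derive.
    - repeat split; apply (smooth_ex rho Hsm).
    - change (Derive (fun x : R => rho x) th) with (Derive rho th). unfold bcurve'; simpl. ring. }
  assert (fper : forall x, f (x + 2 * PI) = f x).
  { intros x. unfold f. rewrite Hper, cos_per, sin_per. reflexivity. }
  assert (Hcont : forall c, continuity_pt f c).
  { intros c. apply derivable_continuous_pt. exists (K1 * fst (bcurve' rho c) + K2 * snd (bcurve' rho c)).
    apply is_derive_Reals, Df. }
  pose proof PI_RGT_0 as Hpi.
  destruct (continuity_ab_maj f 0 (4 * PI) ltac:(lra) (fun c _ => Hcont c)) as [Mx [Hmax HMx]].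
  assert (Glob : forall x, f x <= f Mx).
  { intros x. destruct (reduce2pi x) as [m Hm].
    replace x with ((x - 2 * PI * IZR m) + 2 * PI * IZR m) by ring.
    rewrite (periodZ f fper). apply Hmax. lra. }
  assert (Hpos : 0 < f Mx).
  { pose proof (Rlt_0_1). destruct Hk as [Hk|Hk]; destruct (Rdichotomy _ _ Hk) as [Hl|Hl].
    - apply Rlt_le_trans with (f PI); [|apply Glob]. unfold f. rewrite cos_PI, sin_PI.
      specialize (Hrp PI). nra.
    - apply Rlt_le_trans with (f 0); [|apply Glob]. unfold f. rewrite cos_0, sin_0.
      specialize (Hrp 0). nra.
    - apply Rlt_le_trans with (f (- (PI / 2))); [|apply Glob]. unfold f. rewrite cos_neg, sin_neg, cos_PI2, sin_PI2.
      specialize (Hrp (- (PI/2))). nra.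
    - apply Rlt_le_trans with (f (PI / 2)); [|apply Glob]. unfold f. rewrite cos_PI2, sin_PI2.
      specialize (Hrp (PI/2)). nra. }
  assert (Crit : forall th, f th = f Mx -> K1 * fst (bcurve' rho th) + K2 * snd (bcurve' rho th) = 0).
  { intros th Hth.
    assert (pr : derivable_pt f th).
    { exists (K1 * fst (bcurve' rho th) + K2 * snd (bcurve' rho th)). apply is_derive_Reals, Df. }
    rewrite <- (derive_pt_eq_0 f th _ pr (proj1 (is_derive_Reals _ _ _) (Df th))).
    apply (deriv_maximum f (th - 1) (th + 1) th pr); try lra.
    intros x _ _. rewrite Hth. apply Glob. }
  exists Mx.
  change (IZR k1 * fst (bcurve rho Mx) + IZR k2 * snd (bcurve rho Mx)) with (f Mx).
  set (T := f Mx) in *.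
  split; [exact Hpos|].
  exists (fun t => t * K1 / T), (fun t => t * K2 / T),
    (fun _ => rho Mx * cos Mx), (fun _ => rho Mx * sin Mx), k1, k2.
  assert (HT0 : T <> 0) by lra.
  split; [|split; [|split; [|split; reflexivity]]].
  2: { change (T * K1 / T = 0 * K1 / T + K1). field. exact HT0. }
  2: { change (T * K2 / T = 0 * K2 / T + K2). field. exact HT0. }
  intros t. split.
  - exists Mx. reflexivity.
  - exists (K1 / T), (K2 / T), 0, 0.
    split; [auto_derive; [exact I|field; lra]|].
    split; [auto_derive; [exact I|field; lra]|].
    split; [auto_derive; [exact I|ring]|].
    split; [auto_derive; [exact I|ring]|].
    split.
    + unfold lambda_can; simpl. replace (rho Mx * cos Mx * (K1 / T) + rho Mx * sin Mx * (K2 / T)) with (T / T) by (unfold T, f; field; exact HT0). field. exact HT0.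
    + intros al w [th [s [Hp Hw]]]. subst w.
      assert (HfT : f th = f Mx).
      { unfold f. unfold bcurve in Hp. injection Hp as E1 E2. rewrite <- E1, <- E2. reflexivity. }
      pose proof (Crit th HfT) as Hc.
      unfold dlambda; cbn [fst snd].
      replace (0 * fst al - K1 / T * (s * fst (bcurve' rho th)) + (0 * snd al - K2 / T * (s * snd (bcurve' rho th))))
        with (- (s / T) * (K1 * fst (bcurve' rho th) + K2 * snd (bcurve' rho th))) by (field; lra).
      rewrite Hc. ring.
Qed.

Theorem propositionA1 (rhoU rhoV : R -> R) :
  radial_function rhoU -> radial_function rhoV ->
  (forall x, star_domain rhoU x -> star_domain rhoV x) ->
  convex2 (star_domain rhoV) ->
  Rbar_le (sys rhoU) (sys rhoV).
Proof.
  intros HU HV Hsub Hconv. unfold sys.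
  destruct (Glb_Rbar_correct (closed_reeb_period rhoU)) as [lbU _].
  destruct (Glb_Rbar_correct (closed_reeb_period rhoV)) as [_ glbV].
  apply glbV. intros T HT.
  pose proof (proj1 HT) as HT0.
  destruct (orbit_data rhoV T HT) as [th0 [k1 [k2 [Htan Hval]]]].
  assert (Hnz : IZR k1 <> 0 \/ IZR k2 <> 0).
  { destruct (Req_dec (IZR k1) 0) as [E1|E1]; [|left; exact E1].
    destruct (Req_dec (IZR k2) 0) as [E2|E2]; [|right; exact E2].
    rewrite E1, E2 in Hval. lra. }
  destruct (U_orbit rhoU HU k1 k2 Hnz) as [m Hm].
  apply Rbar_le_trans with (Finite (IZR k1 * fst (bcurve rhoU m) + IZR k2 * snd (bcurve rhoU m))).
  - apply lbU. exact Hm.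
  - change (IZR k1 * fst (bcurve rhoU m) + IZR k2 * snd (bcurve rhoU m) <= T).
    rewrite <- Hval. apply (support rhoV HV Hconv th0 _ _ Htan ltac:(lra) (bcurve rhoU m)).
    apply Hsub. exists (rhoU m), m. split; [|reflexivity].
    destruct HU as [_ [Hp _]]. specialize (Hp m). lra.
Qed.
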